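(* Let $(X,\mathcal{A},\mu,\tau,C_\tau)$ be a composition dynamical system on the Orlicz–Lorentz space $\mathbb{L}^{\varphi,h}(\mu)$, where in addition $\tau$ is bijective and $\tau^{-1}$ also satisfies $\mu(\tau(A))\le M'\mu(A)$ for all $A\in\mathcal{A}$ and some $M'>0$, so that $C_\tau$ is invertible with $C_\tau^{-1}=C_{\tau^{-1}}$. Then $C_\tau$ is expansive if and only if for every $A\in\mathcal{A}$ with $0<\mu(A)<\infty$, $$\inf_{n\in\mathbb{Z}}\ \varphi^{-1}\!\left(\frac{1}{\int_0^{\mu(\tau^{-n}(A))}h(t)\,dt}\right)=0 .$$
   Context: Let $(X,\mathcal{A},\mu)$ be a measure space. For a measurable $g$, its distribution function is $\mu_g(\lambda)=\mu\{x:|g(x)|>\lambda\}$ and its non-increasing rearrangement is $g^*(t)=\inf\{\lambda>0:\mu_g(\lambda)\le t\}$. An Orlicz function is a convex $\varphi:[0,\infty)\to[0,\infty)$ with $\varphi(0)=0$ and $\varphi(s)\to\infty$ as $s\to\infty$; here $\varphi$ is assumed continuous and strictly increasing, and $\varphi^{-1}$ denotes its inverse. A weight is a locally integrable, non-increasing function $h:[0,\mu(X))\to(0,\infty)$. The Orlicz–Lorentz space is $\mathbb{L}^{\varphi,h}(\mu)=\{g \text{ measurable}: I_{\varphi,h}(\lambda g)<\infty \text{ for some }\lambda>0\}$ with $I_{\varphi,h}(g)=\int_0^{\mu(X)}\varphi(g^*(t))h(t)\,dt$, normed by $\|g\|_{\varphi,h}=\inf\{\lambda>0: I_{\varphi,h}(g/\lambda)\le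 1\}$ (functions equal a.e. identified). For $A\in\mathcal{A}$ with $0<\mu(A)<\infty$ one has $\|\chi_A\|_{\varphi,h}=1/\varphi^{-1}\big(1/\int_0^{\mu(A)}h(t)\,dt\big)$. A composition dynamical system $(X,\mathcal{A},\mu,\tau,C_\tau)$ means: $(X,\mathcal{A},\mu)$ is $\sigma$-finite; $\tau:X\to X$ is injective and bi-measurable; there is $M>0$ with $\mu(\tau^{-1}(A))\le M\mu(A)$ for all $A\in\mathcal{A}$; and $C_\tau g=g\circ\tau$ is the (bounded) composition operator on $\mathbb{L}^{\varphi,h}(\mu)$. For an invertible bounded operator $T$ on a Banach space $Y$ with unit sphere $S_Y$: $T$ is expansive if for every $y\in S_Y$ there is $n\in\mathbb{Z}$ with $\|T^n y\|\ge 2$ (equivalently, $\sup_{n\in\mathbb{Z}}\|T^n y\|=\infty$ for every $y\neq0$). *)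

(* Defs.v *)
From HB Require Import structures.
From mathcomp Require Import all_boot all_order all_algebra.
From mathcomp Require Import all_classical all_reals all_analysis.
Set Implicit Arguments. Unset Strict Implicit. Unset Printing Implicit Defensive.
Import Order.TTheory GRing.Theory Num.Theory.
Import numFieldNormedType.Exports.
Local Open Scope classical_set_scope.
Local Open Scope ring_scope.
Local Open Scope ereal_scope.

Section OrliczLorentz.
Context {d : measure_display} {T : measurableType d} {R : realType}.

Definition distrib (mu : set T -> \bar R) (g : T -> R) (l : R) : \bar R :=
  mu [set x | (l < `|g x|)%R].

Definition rearr (mu : set T -> \bar R) (g : T -> R) (t : R) : \bar R :=
  ereal_inf [set l%:E | l in [set l : R | (0 < l)%R /\ distrib mu g l <= t%:E]].

Definition phiE (phi : R -> R) (x : \bar R) : \bar R :=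
  match x with
  | EFin r => (phi r)%:E
  | +oo => +oo
  | -oo => 0
  end.

Definition supp_int (mu : set T -> \bar R) : set R :=
  [set t : R | (0 <= t)%R /\ t%:E < mu setT].

Definition modular (mu : set T -> \bar R) (phi h : R -> R) (g : T -> R) : \bar R :=
  \int[lebesgue_measure]_(t in supp_int mu) (phiE phi (rearr mu g t) * (h t)%:E).

Definition in_OL (mu : set T -> \bar R) (phi h : R -> R) (g : T -> R) : Prop :=
  measurable_fun setT g /\
  exists l : R, (0 < l)%R /\ modular mu phi h (fun x => l * g x)%R < +oo.

Definition olnorm (mu : set T -> \bar R) (phi h : R -> R) (g : T -> R) : \bar R :=
  ereal_inf [set l%:E | l in [set l : R | (0 < l)%R /\
                          modular mu phi h (fun x => g x / l)%R <= 1]].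

Definition tau_iter (tau tauinv : T -> T) (n : int) : T -> T :=
  match n with
  | Posz k => iter k tau
  | Negz k => iter k.+1 tauinv
  end.

(* expansivity of C_tau: every g in the unit sphere has some n in Z with
   ||C_tau^n g|| >= 2, where C_tau^n g = g o tau^n *)
Definition ol_expansive (mu : set T -> \bar R) (phi h : R -> R)
  (tau tauinv : T -> T) : Prop :=
  forall g : T -> R, in_OL mu phi h g -> olnorm mu phi h g = 1 ->
    exists n : int, 2%:E <= olnorm mu phi h (g \o tau_iter tau tauinv n).

Definition hint (h : R -> R) (a : \bar R) : \bar R :=
  \int[lebesgue_measure]_(t in [set t : R | (0 <= t)%R /\ t%:E < a]) (h t)%:E.

(* phi^{-1}(1 / int_0^a h), with 1/+oo = 0 and phi^{-1}(0) = 0 *)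
Definition fundamental (phi_inv h : R -> R) (a : \bar R) : R :=
  match hint h a with
  | EFin r => phi_inv (r^-1)%R
  | _ => 0%R
  end.

End OrliczLorentz.

(* Main.v *)
Require Import Defs.
From HB Require Import structures.
From mathcomp Require Import all_boot all_order all_algebra.
From mathcomp Require Import all_classical all_reals all_analysis.
From mathcomp Require Import zify measurable_realfun.
Import Order.TTheory GRing.Theory Num.Theory.
Import numFieldNormedType.Exports.
Local Open Scope classical_set_scope.
Local Open Scope ring_scope.
Section TauIter.
Context {d : measure_display} {T : measurableType d} (tau tauinv : T -> T).
Hypotheses (tK : cancel tau tauinv) (tiK : cancel tauinv tau).
Local Notation ti := (tau_iter tau tauinv).

Lemma tau_iterS (z : int) x : ti (1 + z) x = tau (ti z x).
Proof.
case: z => [k|[|k]].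
- have -> : (1 + Posz k = Posz k.+1)%R by lia.
  by [].
- have -> : (1 + Negz 0 = Posz 0)%R by rewrite NegzE.
  by rewrite /= tiK.
- have -> : (1 + Negz k.+1 = Negz k)%R by rewrite !NegzE; lia.
  by rewrite /tau_iter iterS tiK.
Qed.

Lemma tau_iterP (z : int) x : ti (z - 1) x = tauinv (ti z x).
Proof.
case: z => [[|k]|k].
- by [].
- have -> : (Posz k.+1 - 1 = Posz k)%R by lia.
  by rewrite /tau_iter iterS tK.
- have -> : (Negz k - 1 = Negz k.+1)%R by rewrite !NegzE; lia.
  by rewrite /tau_iter iterS.
Qed.

Lemma tau_iterD (a b : int) x : ti a (ti b x) = ti (a + b) x.
Proof.
case: a => [k|k].
- elim: k => [|k IH]; first by rewrite add0r.
  have -> : (Posz k.+1 + b = 1 + (Posz k + b))%R by lia.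
  by rewrite tau_iterS -IH /tau_iter iterS.
- elim: k => [|k IH].
  + have -> : (Negz 0 + b = b - 1)%R by rewrite NegzE; lia.
    by rewrite tau_iterP.
  + have -> : (Negz k.+1 + b = (Negz k + b) - 1)%R by rewrite !NegzE; lia.
    by rewrite tau_iterP -IH /tau_iter iterS.
Qed.

End TauIter.
Section TauMeas.
Local Open Scope ereal_scope.
Context {d : measure_display} {T : measurableType d} {R : realType}
  (mu : {measure set T -> \bar R}) (tau tauinv : T -> T) (M M' : R).
Hypotheses (tK : cancel tau tauinv) (tiK : cancel tauinv tau)
  (mtau : measurable_fun setT tau)
  (mimg : forall A : set T, measurable A -> measurable (tau @` A))
  (M0 : (0 < M)%R) (hM : forall A : set T, measurable A -> mu (tau @^-1` A) <= M%:E * mu A)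
  (M'0 : (0 < M')%R) (hM' : forall A : set T, measurable A -> mu (tau @` A) <= M'%:E * mu A).

Definition goodset (A : set T) := measurable A /\ 0 < mu A /\ mu A < +oo.

Lemma preim_tauinv (A : set T) : tauinv @^-1` A = tau @` A.
Proof.
apply/seteqP; split => x /=.
- by move=> Ax; exists (tauinv x) => //.
- by case=> y Ay <-; rewrite tK.
Qed.

Lemma mtauinv : measurable_fun setT tauinv.
Proof. by move=> _ Y mY; rewrite setTI preim_tauinv; exact: mimg. Qed.

Lemma measurable_iter (f : T -> T) k : measurable_fun setT f ->
  measurable_fun setT (iter k f).
Proof.
move=> mf; elim: k => [|k IH] /=; first exact: measurable_id.
exact: (measurableT_comp mf IH).
Qed.

Lemma mtau_iter n : measurable_fun setT (tau_iter tau tauinv n).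
Proof. case: n => k /=; apply: measurable_iter => //; exact: mtauinv. Qed.

Lemma mpreim (f : T -> T) (A : set T) : measurable_fun setT f -> measurable A ->
  measurable (f @^-1` A).
Proof. by move=> mf mA; rewrite -(setTI (f @^-1` A)); exact: mf. Qed.

Lemma good_tau A : goodset A -> goodset (tau @^-1` A).
Proof.
move=> [mA [A0 Aoo]]; have mB := @mpreim tau A mtau mA.
split => //; split.
- rewrite lt0e measure_ge0 andbT; apply/eqP => B0.
  have : mu A <= M'%:E * mu (tau @^-1` A).
    rewrite {1}(_ : A = tau @` (tau @^-1` A)); first exact: hM' mB.
    apply/seteqP; split => x /=; last by case=> y /= Ay <-.
    by move=> Ax; exists (tauinv x); rewrite /= tiK.
  by rewrite B0 mule0 leNgt A0.
- apply: (le_lt_trans (hM _ mA)); apply: lte_mul_pinfty => //.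
  by rewrite lee_fin ltW.
Qed.

Lemma good_tauinv A : goodset A -> goodset (tauinv @^-1` A).
Proof.
move=> [mA [A0 Aoo]]; rewrite preim_tauinv; have mB := mimg _ mA.
split => //; split.
- rewrite lt0e measure_ge0 andbT; apply/eqP => B0.
  have : mu A <= M%:E * mu (tau @` A).
    rewrite {1}(_ : A = tau @^-1` (tau @` A)); last first.
      apply/seteqP; split => x /=; first by move=> Ax; exists x.
      by case=> y Ay /(can_inj tK) <-.
    exact: hM mB.
  by rewrite B0 mule0 leNgt A0.
- apply: (le_lt_trans (hM' _ mA)); apply: lte_mul_pinfty => //.
  by rewrite lee_fin ltW.
Qed.

Lemma good_iterf (f : T -> T) k A : (forall B, goodset B -> goodset (f @^-1` B)) ->
  goodset A -> goodset (iter k f @^-1` A).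
Proof.
move=> hf; elim: k A => [|k IH] A gA //=.
exact: (IH (f @^-1` A) (hf _ gA)).
Qed.

Lemma good_iter n A : goodset A -> goodset (tau_iter tau tauinv n @^-1` A).
Proof.
case: n => k /=; apply: good_iterf; [exact: good_tau|exact: good_tauinv].
Qed.

End TauMeas.
Section EInf.
Local Open Scope ereal_scope.
Context {R : realType}.

Lemma einf_posP (P : R -> Prop) : (forall l, (0 < l)%R -> P l) ->
  ereal_inf [set l%:E | l in [set l : R | (0 < l)%R /\ P l]] = 0.
Proof.
move=> HP; apply/eqP; rewrite eq_le; apply/andP; split.
- apply/lee_addgt0Pr => e e0; rewrite add0e; apply: ereal_inf_lbound.
  by exists e => //; split => //; exact: HP.
- by apply: le_ereal_inf_tmp => _ [l [l0 _] <-]; rewrite lee_fin ltW.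
Qed.

Lemma einf_geP (c : R) (P : R -> Prop) : (0 < c)%R ->
  (forall l, (0 < l)%R -> (P l <-> (c <= l)%R)) ->
  ereal_inf [set l%:E | l in [set l : R | (0 < l)%R /\ P l]] = c%:E.
Proof.
move=> c0 HP; apply/eqP; rewrite eq_le; apply/andP; split.
- by apply: ereal_inf_lbound; exists c => //; split => //; apply/HP.
- by apply: le_ereal_inf_tmp => _ [l [l0 /(HP _ l0) cl] <-]; rewrite lee_fin.
Qed.

End EInf.

Section Phi.
Context {R : realType} (phi phi_inv : R -> R).
Hypotheses (phi0 : phi 0 = 0)
  (phi_incr : forall x y : R, 0 <= x -> x < y -> phi x < phi y)
  (phi_inv1 : forall s : R, 0 <= s -> phi_inv (phi s) = s)
  (phi_inv2 : forall s : R, 0 <= s -> 0 <= phi_inv s /\ phi (phi_inv s) = s).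

Lemma phi_le x y : 0 <= x -> x <= y -> phi x <= phi y.
Proof.
move=> x0; rewrite le_eqVlt => /predU1P[->//|xy]; exact/ltW/phi_incr.
Qed.

Lemma phi_ge0 x : 0 <= x -> 0 <= phi x.
Proof. by move=> x0; rewrite -phi0; exact: phi_le. Qed.

Lemma phi_leP x y : 0 <= x -> 0 <= y -> (phi x <= phi y) = (x <= y).
Proof.
move=> x0 y0; apply/idP/idP; last exact: phi_le.
by move=> h; rewrite leNgt; apply/negP => /(phi_incr _ _ y0); rewrite ltNge h.
Qed.

Lemma pinv_pos r : 0 < r -> 0 < phi_inv r^-1.
Proof.
move=> r0; have ri : 0 <= r^-1 by rewrite invr_ge0 ltW.
  have [p0 pp] := phi_inv2 _ ri.
rewrite lt_neqAle p0 andbT; apply/negP => /eqP p00.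
by move: pp; rewrite -p00 phi0 => /esym/eqP; rewrite invr_eq0 gt_eqF.
Qed.

Lemma phi_key r c : 0 < r -> 0 <= c ->
  (((phi c)%:E * r%:E <= 1)%E <-> c <= phi_inv r^-1).
Proof.
move=> r0 c0; have ri : 0 <= r^-1 by rewrite invr_ge0 ltW.
  have [p0 pp] := phi_inv2 _ ri.
rewrite -EFinM lee_fin -(phi_leP _ _ c0 p0) pp -[r^-1]mul1r ler_pdivlMr//.
Qed.

End Phi.
Section Hint.
Local Open Scope ereal_scope.
Context {R : realType} (h : R -> R) (X : \bar R).
Hypotheses (hpos : forall t : R, (0 <= t)%R -> t%:E < X -> (0 < h t)%R)
  (hmono : forall s t : R, (0 <= s)%R -> (s <= t)%R -> t%:E < X -> (h t <= h s)%R).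

Definition hext (t : R) : R :=
  if (Num.max t 0%R)%:E < X then h (Num.max t 0%R) else 0%R.

Lemma hext_noninc : {homo hext : s t / (s <= t)%R >-> (t <= s)%R}.
Proof.
move=> s t st; rewrite /hext.
have mst : (Num.max s 0%R <= Num.max t 0%R)%R by rewrite ge_max !le_max st lexx orbT andbT/=. 
case: ifPn => ht.
- have hs : (Num.max s 0%R)%:E < X by apply: le_lt_trans ht; rewrite lee_fin.
  rewrite hs; apply: hmono => //; by rewrite le_max lexx orbT.
- case: ifPn => hs //; apply/ltW/hpos => //; by rewrite le_max lexx orbT.
Qed.

Lemma measurable_h (D : set R) : measurable D ->
  D `<=` [set t | (0 <= t)%R /\ t%:E < X] -> measurable_fun D h.
Proof.
move=> mD DS; apply: (@eq_measurable_fun _ _ _ _ D hext).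
  move=> t; rewrite inE => /DS [t0 tX].
  by rewrite /hext (max_idPl t0) tX.
apply: nonincreasing_measurable => //; exact: hext_noninc.
Qed.

Lemma Sitv (m : R) : [set t : R | (0 <= t)%R /\ t%:E < m%:E] = `[0%R, m[%classic.
Proof. by apply/seteqP; split => t /=; rewrite in_itv /= lte_fin => /andP || case=> -> ->. Qed.

End Hint.
Section Hint2.
Local Open Scope ereal_scope.
Context {R : realType} (h : R -> R) (X : \bar R).
Hypotheses (hpos : forall t : R, (0 <= t)%R -> t%:E < X -> (0 < h t)%R)
  (hmono : forall s t : R, (0 <= s)%R -> (s <= t)%R -> t%:E < X -> (h t <= h s)%R).

Lemma hint_fin (m : R) : (0 < m)%R -> m%:E <= X ->
  exists2 r : R, hint h m%:E = r%:E & (0 < r)%R.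
Proof.
move=> m0 mX.
set S := [set t : R | (0 <= t)%R /\ t%:E < m%:E].
have mS : measurable S by rewrite /S Sitv; exact: measurable_itv.
have SX : S `<=` [set t | (0 <= t)%R /\ t%:E < X].
  by move=> t [t0 tm]; split => //; exact: lt_le_trans mX.
have mh : measurable_fun S (EFin \o h).
  by apply/measurable_EFinP; exact: measurable_h mS SX.
have h0 : forall t, S t -> 0 <= (h t)%:E.
  by move=> t /SX [t0 tX]; rewrite lee_fin ltW// hpos.
have hI : hint h m%:E = \int[lebesgue_measure]_(t in S) (h t)%:E by [].
have up : hint h m%:E <= (h 0%R * m)%:E.
  rewrite hI; apply: (@le_trans _ _ (\int[lebesgue_measure]_(t in S) (cst (h 0%R)%:E) t)).
    apply: ge0_le_integral => //.
    move=> t /[dup] St [t0 tm] /=; rewrite lee_fin; apply: hmono => //.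
    by case: (SX _ St).
  have LM : lebesgue_measure (`[0%R, m[%classic : set R) = m%:E.
    by rewrite lebesgue_measure_itv /= lte_fin m0 sube0.
  rewrite integral_cst// /S Sitv EFinM; rewrite le_eqVlt; apply/orP; left; apply/eqP; congr (_ * _); exact: LM.
have low : (h (m / 2) * (m / 2))%:E <= hint h m%:E.
  have m20 : (0 < m / 2)%R by rewrite divr_gt0.
  have mm2 : (m / 2 < m)%R by rewrite ltr_pdivrMr// ltr_pMr// ltr1n.
  set S2 := `[0%R, (m / 2)%R]%classic.
  have S2S : S2 `<=` S.
    move=> t; rewrite /S2 /= in_itv /= => /andP[t0 tm]; split => //.
    by rewrite lte_fin (le_lt_trans tm).
  have mS2 : measurable S2 by exact: measurable_itv.
  rewrite hI; apply: (le_trans _ (ge0_subset_integral lebesgue_measure mS2 mS mh h0 S2S)).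
  apply: (@le_trans _ _ (\int[lebesgue_measure]_(t in S2) (cst (h (m / 2))%:E) t)).
    have LM : lebesgue_measure (`[0%R, (m / 2)%R]%classic : set R) = (m / 2)%:E.
      by rewrite lebesgue_measure_itv /= lte_fin m20 sube0.
    rewrite integral_cst// EFinM; rewrite le_eqVlt; apply/orP; left; apply/eqP; congr (_ * _); exact/esym/LM.
  apply: ge0_le_integral => //.
  - move=> t _; rewrite lee_fin ltW// hpos ?divr_ge0 ?ltW//.
    by rewrite (lt_le_trans _ mX)// lte_fin.
  - exact: measurable_funS mS S2S mh.
  - move=> t; rewrite /S2 /= in_itv /= => /andP[t0 tm]; rewrite lee_fin; apply: hmono => //.
    by rewrite (lt_le_trans _ mX)// lte_fin (le_lt_trans tm).
have pos : 0 < (h (m / 2) * (m / 2))%:E.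
  rewrite lte_fin mulr_gt0 ?divr_gt0// hpos ?divr_ge0 ?ltW//.
  by rewrite (lt_le_trans _ mX)// lte_fin ltr_pdivrMr// ltr_pMr// ltr1n.
move: up low; case: (hint h m%:E) => [r| |] // up low.
by exists r => //; rewrite -lte_fin (lt_le_trans pos low).
Qed.

End Hint2.
Section IntMono.
Local Open Scope ereal_scope.
Context {d : measure_display} {T : measurableType d} {R : realType}
  (mu : {measure set T -> \bar R}).

Lemma le_integral_nm (D : set T) (f1 f2 : T -> \bar R) :
  (forall x, D x -> 0 <= f1 x) -> (forall x, D x -> f1 x <= f2 x) ->
  \int[mu]_(x in D) f1 x <= \int[mu]_(x in D) f2 x.
Proof.
move=> f10 f12.
have f20 : forall x, D x -> 0 <= f2 x by move=> x Dx; exact: le_trans (f10 _ Dx) (f12 _ Dx).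
rewrite (ge0_integralE _ f10) (ge0_integralE _ f20) /=.
apply: ge_ereal_sup => _ [g gf <-]; apply: ereal_sup_ubound; exists g => //= x.
apply: le_trans (gf x) _; rewrite !patchE; case: ifPn => // /[!inE] Dx.
exact: f12.
Qed.

End IntMono.
Section Rearr.
Local Open Scope ereal_scope.
Context {d : measure_display} {T : measurableType d} {R : realType}
  (mu : {measure set T -> \bar R}).

Lemma rearr_ge0 (g : T -> R) t : 0 <= rearr mu g t.
Proof. by apply: le_ereal_inf_tmp => _ [l [l0 _] <-]; rewrite lee_fin ltW. Qed.

Lemma rearr0 (g : T -> R) t : (forall l, (0 < l)%R -> distrib mu g l <= t%:E) ->
  rearr mu g t = 0.
Proof. by move=> H; rewrite /rearr einf_posP. Qed.

Lemma distrib_ind (g : T -> R) (B : set T) (c : R) l : (0 < c)%R -> (0 <= l)%R ->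
  (forall x, B x -> (`|g x| = c)%R) -> (forall x, ~ B x -> g x = 0%R) ->
  distrib mu g l = if (l < c)%R then mu B else 0.
Proof.
move=> c0 l0 gB gnB; rewrite /distrib; case: ifPn => lc.
- congr (mu _); apply/seteqP; split => x /=.
  + move=> lg; apply/not_notP => nB; move: lg; rewrite gnB // normr0.
    by rewrite ltNge l0.
  + by move=> Bx; rewrite gB.
- rewrite -(measure0 mu); congr (mu _); apply/seteqP; split => x //=.
  have [Bx|nBx] := pselect (B x).
  + by rewrite gB // (negbTE lc). 
  + by rewrite gnB // normr0 ltNge l0.
Qed.

Lemma rearr_ind (g : T -> R) (B : set T) (c : R) t : (0 < c)%R -> (0 <= t)%R ->
  (forall x, B x -> (`|g x| = c)%R) -> (forall x, ~ B x -> g x = 0%R) ->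
  rearr mu g t = if t%:E < mu B then c%:E else 0.
Proof.
move=> c0 t0 gB gnB; rewrite /rearr; case: ifPn => tB.
- apply: einf_geP => // l l0; rewrite (distrib_ind _ _ _ _ c0 (ltW l0) gB gnB).
  case: ifPn => lc; split.
  + by move=> /(lt_le_trans tB); rewrite ltxx.
  + by move=> cl; move: lc; rewrite ltNge cl.
  + by move=> _; rewrite leNgt.
  + by rewrite lee_fin.
- apply: einf_posP => l l0; rewrite (distrib_ind _ _ _ _ c0 (ltW l0) gB gnB).
  by case: ifPn => _; [rewrite leNgt|rewrite lee_fin].
Qed.

End Rearr.
Section Modular.
Local Open Scope ereal_scope.
Context {d : measure_display} {T : measurableType d} {R : realType}
  (mu : {measure set T -> \bar R}) (phi h : R -> R).
Hypotheses (phi0 : phi 0%R = 0%R)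
  (phi_incr : forall x y : R, (0 <= x)%R -> (x < y)%R -> (phi x < phi y)%R)
  (hpos : forall t : R, (0 <= t)%R -> t%:E < mu setT -> (0 < h t)%R)
  (hmono : forall s t : R, (0 <= s)%R -> (s <= t)%R -> t%:E < mu setT -> (h t <= h s)%R).

Lemma phiE_ge0 x : 0 <= x -> 0 <= phiE phi x.
Proof.
case: x => [r| |] //=; rewrite lee_fin => r0.
exact: (phi_ge0 _ phi0 phi_incr).
Qed.

Lemma phiE_le x y : 0 <= x -> x <= y -> phiE phi x <= phiE phi y.
Proof.
case: x => [r| |] //; case: y => [s| |] //=; rewrite ?lee_fin => r0 rs //.
- exact: (phi_le _ phi_incr).
- by rewrite leey.
Qed.

Lemma modular_ind (g : T -> R) (B : set T) (c : R) : measurable B ->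
  (0 < c)%R -> mu B < +oo ->
  (forall x, B x -> (`|g x| = c)%R) -> (forall x, ~ B x -> g x = 0%R) ->
  modular mu phi h g = (phi c)%:E * hint h (mu B).
Proof.
move=> mB c0 Boo gB gnB.
have mBX : mu B <= mu setT by apply: le_measure; rewrite ?inE.
have [m mBm] : exists m, mu B = m%:E.
  by exists (fine (mu B)); rewrite fineK// ge0_fin_numE// measure_ge0.
set S := [set t : R | (0 <= t)%R /\ t%:E < mu B].
have mS : measurable S by rewrite /S mBm Sitv; exact: measurable_itv.
have SX : S `<=` [set t | (0 <= t)%R /\ t%:E < mu setT].
  by move=> t [t0 tm]; split => //; exact: lt_le_trans mBX.
have mh : measurable_fun S (EFin \o h).
  by apply/measurable_EFinP; exact: (@measurable_h R h (mu setT) hpos hmono S mS SX).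
have pc : (0 <= phi c)%R by apply: (phi_ge0 _ phi0 phi_incr); rewrite ltW.
rewrite /modular /hint -ge0_integralZl_EFin//; last first.
  by move=> t /SX [t0 tX]; rewrite lee_fin ltW// hpos.
rewrite [RHS]integral_mkcond [LHS]integral_mkcond; apply: eq_integral => t _.
rewrite !patchE.
have [tS|tS] := boolP (t \in S).
- have tX : t \in supp_int mu by apply/mem_set; apply: SX; exact/set_mem.
  rewrite tX; move/set_mem: tS => -[t0 tB].
  by rewrite (rearr_ind _ _ _ _ _ c0 t0 gB gnB) tB.
- case: ifPn => // /set_mem [t0 tX].
  have nS : ~ S t by move=> St; move/negP: tS; apply; exact: mem_set.
  rewrite (rearr_ind _ _ _ _ _ c0 t0 gB gnB) ifF /= ?phi0 ?mul0e//.
  by apply/negP => tB; apply: nS.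
Qed.

Lemma mlevel (g : T -> R) (l : R) : measurable_fun setT g ->
  measurable [set x | (l < `|g x|)%R].
Proof.
move=> mg; have mng : measurable_fun setT ((@Num.norm R R) \o g).
  by apply: measurableT_comp mg; exact: normr_measurable.
have := mng measurableT _ (@measurable_itv _ `]l, +oo[).
rewrite setTI; congr measurable; apply/seteqP; split => x /=; rewrite in_itv /= andbT //.
Qed.

Lemma rearr_le (g1 g2 : T -> R) t : measurable_fun setT g1 -> measurable_fun setT g2 ->
  (forall x, (`|g1 x| <= `|g2 x|)%R) -> rearr mu g1 t <= rearr mu g2 t.
Proof.
move=> m1 m2 g12; apply: ereal_inf_le_tmp => _ [l [l0 dl] <-]; exists l => //; split => //.
apply: le_trans dl; apply: le_measure; rewrite ?inE; try exact: mlevel.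
by move=> x /= /lt_le_trans; apply.
Qed.

Lemma modular_le (g1 g2 : T -> R) : measurable_fun setT g1 -> measurable_fun setT g2 ->
  (forall x, (`|g1 x| <= `|g2 x|)%R) -> modular mu phi h g1 <= modular mu phi h g2.
Proof.
move=> m1 m2 g12; apply: le_integral_nm.
- move=> t [t0 tX]; apply: mule_ge0; first exact/phiE_ge0/rearr_ge0.
  by rewrite lee_fin ltW// hpos.
- move=> t [t0 tX]; apply: lee_wpmul2r; first by rewrite lee_fin ltW// hpos.
  apply: phiE_le; first exact: rearr_ge0.
  exact: rearr_le.
Qed.

End Modular.
Set Implicit Arguments. Unset Strict Implicit.
Section Olnorm.
Local Open Scope ereal_scope.
Context {d : measure_display} {T : measurableType d} {R : realType}
  (mu : {measure set T -> \bar R}) (phi phi_inv h : R -> R).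
Hypotheses (phi0 : phi 0%R = 0%R)
  (phi_incr : forall x y : R, (0 <= x)%R -> (x < y)%R -> (phi x < phi y)%R)
  (phi_inv2 : forall s : R, (0 <= s)%R -> (0 <= phi_inv s)%R /\ phi (phi_inv s) = s)
  (hpos : forall t : R, (0 <= t)%R -> t%:E < mu setT -> (0 < h t)%R)
  (hmono : forall s t : R, (0 <= s)%R -> (s <= t)%R -> t%:E < mu setT -> (h t <= h s)%R).

Let MI := modular_ind mu phi h phi0 phi_incr hpos hmono.
Let ML := modular_le mu phi h phi0 phi_incr hpos.
Let PK := phi_key phi phi_inv phi_incr phi_inv2.
Let PP := pinv_pos phi phi_inv phi0 phi_inv2.

Lemma fund_spec (B : set T) : measurable B -> 0 < mu B -> mu B < +oo ->
  exists2 r : R, hint h (mu B) = r%:E & (0 < r)%R.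
Proof.
move=> mB B0 Boo.
have [m mBm] : exists m, mu B = m%:E.
  by exists (fine (mu B)); rewrite fineK// ge0_fin_numE// measure_ge0.
have mBX : mu B <= mu setT by apply: le_measure; rewrite ?inE.
rewrite mBm; apply: (hint_fin h (mu setT) hpos hmono); last by rewrite -mBm.
by rewrite -lte_fin -mBm.
Qed.

Lemma fund_pos (B : set T) : measurable B -> 0 < mu B -> mu B < +oo ->
  (0 < fundamental phi_inv h (mu B))%R.
Proof.
move=> mB B0 Boo; have [r hr r0] := fund_spec mB B0 Boo.
by rewrite /fundamental hr; exact: PP.
Qed.

Lemma modular_div (g : T -> R) (B : set T) (c l : R) : measurable B ->
  (0 < c)%R -> (0 < l)%R -> 0 < mu B -> mu B < +oo ->
  (forall x, B x -> (`|g x| = c)%R) -> (forall x, ~ B x -> g x = 0%R) ->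
  (modular mu phi h (fun x => (g x / l)%R) <= 1 <-> (c / fundamental phi_inv h (mu B) <= l)%R).
Proof.
move=> mB c0 l0 B0 Boo gB gnB; have [r hr r0] := fund_spec mB B0 Boo.
have cl0 : (0 < c / l)%R by rewrite divr_gt0.
rewrite (@MI (fun x => (g x / l)%R) B (c / l) mB cl0 Boo); first last.
- by move=> x nB; rewrite gnB ?mul0r.
- by move=> x Bx; rewrite normrM gB// normfV gtr0_norm.
have fr : fundamental phi_inv h (mu B) = phi_inv r^-1 by rewrite /fundamental hr.
rewrite hr PK//; last exact: ltW.
rewrite fr.
have p0 := PP r0.
by rewrite ler_pdivrMr// ler_pdivrMr// mulrC.
Qed.

Lemma olnorm_ind (g : T -> R) (B : set T) (c : R) : measurable B ->
  (0 < c)%R -> 0 < mu B -> mu B < +oo ->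
  (forall x, B x -> (`|g x| = c)%R) -> (forall x, ~ B x -> g x = 0%R) ->
  olnorm mu phi h g = (c / fundamental phi_inv h (mu B))%:E.
Proof.
move=> mB c0 B0 Boo gB gnB; rewrite /olnorm; apply: einf_geP.
  by rewrite divr_gt0// fund_pos.
by move=> l l0; exact: modular_div.
Qed.

Lemma olnorm_lb (f : T -> R) (B : set T) (c : R) : measurable_fun setT f ->
  measurable B -> (0 < c)%R -> 0 < mu B -> mu B < +oo ->
  (forall x, B x -> (c <= `|f x|)%R) ->
  (c / fundamental phi_inv h (mu B))%:E <= olnorm mu phi h f.
Proof.
move=> mf mB c0 B0 Boo fB; rewrite /olnorm.
apply: le_ereal_inf_tmp => _ [l [l0 ml] <-]; rewrite lee_fin.
set g := fun x => (c * \1_B x)%R.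
have gB : forall x, B x -> (`|g x| = c)%R.
  by move=> x Bx; rewrite /g indicE mem_set// mulr1 gtr0_norm.
have gnB : forall x, ~ B x -> g x = 0%R.
  by move=> x nBx; rewrite /g indicE memNset// mulr0.
apply/(modular_div mB c0 l0 B0 Boo gB gnB).
apply: le_trans ml; apply: ML.
- apply: measurable_funM; last exact: measurable_cst.
  by apply: measurable_funM; [exact: measurable_cst|exact: measurable_indic].
- by apply: measurable_funM => //; exact: measurable_cst.
- move=> x; rewrite normrM [X in (_ <= X)%R]normrM ler_wpM2r//.
  have [Bx|nBx] := pselect (B x); first by rewrite gB// fB.
  by rewrite gnB// normr0.
Qed.

End Olnorm.

Theorem mainTheorem1 (d : measure_display) (T : measurableType d) (R : realType)
  (mu : {measure set T -> \bar R})
  (phi phi_inv h : R -> R) (tau tauinv : T -> T) (M M' : R) :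
  (* measure space is sigma-finite *)
  sigma_finite setT mu ->
  (* Orlicz function *)
  (forall x y t : R, 0 <= x -> 0 <= y -> 0 <= t <= 1 ->
     phi (t * x + (1 - t) * y) <= t * phi x + (1 - t) * phi y) ->
  phi 0 = 0 ->
  {within [set x : R | 0 <= x], continuous phi} ->
  (forall x y : R, 0 <= x -> x < y -> phi x < phi y) ->
  phi x @[x --> +oo] --> +oo ->
  (* phi_inv is the inverse of phi on [0, +oo) *)
  (forall s : R, 0 <= s -> phi_inv (phi s) = s) ->
  (forall s : R, 0 <= s -> 0 <= phi_inv s /\ phi (phi_inv s) = s) ->
  (* weight h on [0, mu X) *)
  (forall t : R, 0 <= t -> (t%:E < mu setT)%E -> 0 < h t) ->
  (forall s t : R, 0 <= s -> s <= t -> (t%:E < mu setT)%E -> h t <= h s) ->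
  (forall b : R, 0 <= b -> (b%:E < mu setT)%E ->
     lebesgue_measure.-integrable `[0, b] (fun t => (h t)%:E)) ->
  (* tau bijective (tauinv its inverse), bi-measurable *)
  cancel tau tauinv -> cancel tauinv tau ->
  measurable_fun setT tau ->
  (forall A : set T, measurable A -> measurable (tau @` A)) ->
  (* measure conditions on tau and tau^{-1} *)
  0 < M -> (forall A : set T, measurable A -> (mu (tau @^-1` A) <= M%:E * mu A)%E) ->
  0 < M' -> (forall A : set T, measurable A -> (mu (tau @` A) <= M'%:E * mu A)%E) ->
  ol_expansive mu phi h tau tauinv <->
  (forall A : set T, measurable A -> (0 < mu A)%E -> (mu A < +oo)%E ->
     inf (range (fun n : int =>
        fundamental phi_inv h (mu (tau_iter tau tauinv n @^-1` A)))) = 0).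
Proof.
move=> sf _ phi0 _ phi_incr _ phi_inv1 phi_inv2 hpos hmono _ tK tiK mtau mimg M0 hM M'0 hM'.
have GI := @good_iter _ _ _ mu tau tauinv M M' tK tiK mtau mimg M0 hM M'0 hM'.
have OI := olnorm_ind phi0 phi_incr phi_inv2 hpos hmono.
have OL := olnorm_lb phi0 phi_incr phi_inv2 hpos hmono.
have FP := fund_pos phi0 phi_inv2 hpos hmono.
have MI := modular_ind mu phi h phi0 phi_incr hpos hmono.
set F := fun (B : set T) => fundamental phi_inv h (mu B).
split.
- move=> Hexp A mA A0 Aoo.
  have gA : goodset mu A by [].
  set G := fun n : int => tau_iter tau tauinv n @^-1` A.
  have Gg : forall n, goodset mu (G n) := fun n => GI n A gA.
  have Fpos : forall n, 0 < F (G n).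
    by move=> n; case: (Gg n) => [? [? ?]]; exact: FP.
  have key : forall k : nat, exists n : int, 2 ^+ k * F (G n) <= F A.
    elim => [|k [n Hn]].
      by exists 0; rewrite expr0 mul1r.
    set B := G n; have [mB [B0 Boo]] := Gg n; set p := F B.
    set g := fun x => p * \1_B x.
    have gB : forall x, B x -> `|g x| = p.
      by move=> x Bx; rewrite /g indicE mem_set// mulr1 gtr0_norm// Fpos.
    have gnB : forall x, ~ B x -> g x = 0.
      by move=> x nBx; rewrite /g indicE memNset// mulr0.
    have inOL : in_OL mu phi h g.
      split.
        by apply: measurable_funM; [exact: measurable_cst|exact: measurable_indic].
      exists 1; split => //.
      rewrite (MI (fun x => 1 * g x) B p mB (Fpos n) Boo); first last.
      + by move=> x nBx; rewrite mul1r gnB.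
      + by move=> x Bx; rewrite mul1r gB.
      have [r hr r0] := fund_spec hpos hmono mB B0 Boo.
      by rewrite hr -EFinM ltry.
    have n1 : (olnorm mu phi h g = 1)%E.
      by rewrite (OI g B p mB (Fpos n) B0 Boo gB gnB) divff// gt_eqF// Fpos.
    have [m Hm] := Hexp g inOL n1.
    set C := tau_iter tau tauinv m @^-1` B.
    have [mC [C0 Coo]] : goodset mu C := GI m B (Gg n).
    have CG : C = G (n + m).
      by apply/seteqP; split => x; rewrite /C /B /G /= tau_iterD.
    rewrite (OI (g \o tau_iter tau tauinv m) C p mC (Fpos n) C0 Coo) in Hm; first last.
    + by move=> x nCx; rewrite /= gnB.
    + by move=> x Cx; rewrite /= gB.
    have FC0 : 0 < F C by rewrite CG Fpos.
    move: Hm; rewrite lee_fin ler_pdivlMr// => Hm.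
    exists (n + m); rewrite -CG exprSr -mulrA.
    apply: le_trans Hn; rewrite ler_wpM2l// ?exprn_ge0//.
  match goal with |- inf ?X = _ => set S := X end.
  have S0 : S !=set0 by exists (F (G 0)), 0.
  have lbS : lbound S 0 by move=> _ [n _ <-]; exact/ltW/Fpos.
  apply/eqP; rewrite eq_le; apply/andP; split; last exact: lb_le_inf.
  apply/ler_addgt0Pr => e e0; rewrite add0r.
  set k := (Num.truncn (F A / e)).+1.
  have [n Hn] := key k.
  have SF : S (F (G n)) by exists n.
  apply: le_trans (ge_inf (ex_intro _ 0 lbS) SF) _.
  have k2 : (k%:R <= 2 ^+ k :> R).
    by rewrite -natrX ler_nat ltnW// ltn_expl.
  have Fk : F A / e < 2 ^+ k by apply: lt_le_trans k2; exact: truncnS_gt.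
  have Fk' : F A < e * 2 ^+ k by move: Fk; rewrite ltr_pdivrMr// mulrC.
  have k0 : 0 < 2 ^+ k :> R by exact: exprn_gt0.
  move: (le_lt_trans Hn Fk'); rewrite [2 ^+ k * _]mulrC ltr_pM2r//.
  exact: ltW.
- move=> Hinf g [mg _] gn1.
  have [eps e0 Epos] : exists2 eps : R, 0 < eps & (0 < mu [set x | (eps < `|g x|)%R])%E.
    case: (pselect (exists2 eps : R, 0 < eps & (0 < mu [set x | (eps < `|g x|)%R])%E)) => // nE.
    exfalso.
    have : olnorm mu phi h g = 0%E.
      rewrite /olnorm; apply: einf_posP => l l0.
      rewrite /modular integral0_eq // => t [t0 tX].
      rewrite rearr0 /= ?phi0 ?mul0e //.
      move=> l' l'0; rewrite /distrib.
      have -> : [set x | l' < `|g x / l|] = [set x | l * l' < `|g x|].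
        apply/seteqP; split => x /=; rewrite normrM normfV (gtr0_norm l0) ltr_pdivlMr//;
          by rewrite mulrC.
      have : ~ (0 < mu [set x | (l * l' < `|g x|)%R])%E.
        by move=> H; apply: nE; exists (l * l') => //; rewrite mulr_gt0.
      move/negP; rewrite -leNgt => H; apply: le_trans H _.
      by rewrite lee_fin.
    by rewrite gn1 => /eqP; rewrite eqe oner_eq0.
  set E := [set x | eps < `|g x|].
  have mE : measurable E := mlevel g eps mg.
  case: sf => Fs FsT Fsm.
  have [i Hi] : exists i, (0 < mu (E `&` Fs i))%E.
    case: (pselect (exists i, (0 < mu (E `&` Fs i))%E)) => // nI; exfalso.
    have : mu.-negligible E.
      have -> : E = \bigcup_i (E `&` Fs i) by rewrite -setI_bigcupr -FsT setIT.
      apply: negligible_bigcup => k; exists (E `&` Fs k); split => //.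
        exact: measurableI mE (Fsm k).1.
      apply/eqP; rewrite eq_le measure_ge0 andbT leNgt; apply/negP => H.
      by apply: nI; exists k.
    case=> N [mN N0 EN]; have := le_measure mu (mem_set mE) (mem_set mN) EN.
    move=> H; have H' : (mu E <= mu N)%E := H.
    by move: H'; rewrite N0 leNgt Epos.
  set B := E `&` Fs i.
  have mB : measurable B by exact: measurableI mE (Fsm i).1.
  have Boo : (mu B < +oo)%E.
    apply: le_lt_trans (Fsm i).2; apply: le_measure; rewrite ?inE //.
      exact: (Fsm i).1.
    exact: subIsetr.
  have gB : goodset mu B by [].
  move: (Hinf B mB Hi Boo); match goal with |- inf ?X = _ -> _ => set S := X end => Sinf.
  have S0 : S !=set0 by exists (fundamental phi_inv h (mu (tau_iter tau tauinv 0 @^-1` B))), 0.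
  have [_ [n _ <-] Hn] := inf_lt S0 (x := eps / 2) (ltac:(by rewrite Sinf divr_gt0)).
  exists n.
  set C := tau_iter tau tauinv n @^-1` B.
  have [mC [C0 Coo]] : goodset mu C := GI n B gB.
  have mf : measurable_fun setT (g \o tau_iter tau tauinv n).
    exact: measurableT_comp mg (mtau_iter tau tauinv tK tiK mtau mimg n).
  apply: (le_trans _ (OL (g \o tau_iter tau tauinv n) C eps mf mC e0 C0 Coo _)).
    have FC0 : 0 < F C by exact: FP.
    rewrite lee_fin ler_pdivlMr//.
    move: Hn; rewrite ltr_pdivlMr// => /ltW.
    by rewrite mulrC.
  by move=> x [Ex _]; exact: ltW.
Qed.
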